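(* Let $A$ be a nontrivial MV-algebra (i.e. $0\ne 1$) and $\operatorname{Der}(A)$ the set of $(\odot,\vee)$-derivations on $A$. Then: (1) $|\operatorname{Der}(A)|=2$ iff $|A|=2$; (2) $|\operatorname{Der}(A)|=5$ iff $|A|=3$; (3) $|\operatorname{Der}(A)|=9$ iff $|A|=4$.
   Context: An MV-algebra is an algebra $(A,\oplus,{}^*,0)$ of type $(2,1,0)$ satisfying: $x\oplus(y\oplus z)=(x\oplus y)\oplus z$, $x\oplus y=y\oplus x$, $x\oplus 0=x$, $x^{**}=x$, $x\oplus 0^*=0^*$, $(x^*\oplus y)^*\oplus y=(y^*\oplus x)^*\oplus x$. Put $1=0^*$ and $x\odot y=(x^*\oplus y^* )^*$. The natural order is $x\le y$ iff $x^*\oplus y=1$, with lattice operations $x\vee y=(x\odot y^* )\oplus y$, $x\wedge y=x\odot(x^*\oplus y)$. A $(\odot,\vee)$-derivation on $A$ is a map $d:A\to A$ with $d(x\odot y)=(d(x)\odot y)\vee(x\odot d(y))$ for all $x,y\in A$. *)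

(* Defs.v *)
From Stdlib Require Import Arith.

Record MVAlgebra := {
  mv_carrier :> Type;
  mv_oplus : mv_carrier -> mv_carrier -> mv_carrier;
  mv_star : mv_carrier -> mv_carrier;
  mv_zero : mv_carrier;
  mv_assoc : forall x y z, mv_oplus x (mv_oplus y z) = mv_oplus (mv_oplus x y) z;
  mv_comm : forall x y, mv_oplus x y = mv_oplus y x;
  mv_zero_r : forall x, mv_oplus x mv_zero = x;
  mv_invol : forall x, mv_star (mv_star x) = x;
  mv_absorb : forall x, mv_oplus x (mv_star mv_zero) = mv_star mv_zero;
  mv_luk : forall x y,
    mv_oplus (mv_star (mv_oplus (mv_star x) y)) y
    = mv_oplus (mv_star (mv_oplus (mv_star y) x)) x
}.

Section Ops.
Variable A : MVAlgebra.
Definition mv_one : A := mv_star A (mv_zero A).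
Definition mv_odot (x y : A) : A :=
  mv_star A (mv_oplus A (mv_star A x) (mv_star A y)).
Definition mv_join (x y : A) : A :=
  mv_oplus A (mv_odot x (mv_star A y)) y.
Definition mv_meet (x y : A) : A :=
  mv_odot x (mv_oplus A (mv_star A x) y).
End Ops.

Definition is_derivation (A : MVAlgebra) (d : A -> A) : Prop :=
  forall x y : A, d (mv_odot A x y) = mv_join A (mv_odot A (d x) y) (mv_odot A x (d y)).

Definition has_card (T : Type) (P : T -> Prop) (n : nat) : Prop :=
  exists f : nat -> T,
    (forall i j, i < n -> j < n -> f i = f j -> i = j) /\
    (forall i, i < n -> P (f i)) /\
    (forall x, P x -> exists i, i < n /\ f i = x).

(* Main.v *)
Require Import Defs.
From Stdlib Require Import Arith List Bool Lia Permutation ClassicalEpsilon Classical FunctionalExtensionality.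
Import ListNotations.

Fixpoint tup (c : list nat) (m : nat) : list (list nat) :=
  match m with 0 => [[]] | S m => flat_map (fun x => map (cons x) (tup c m)) c end.

Definition allb n (f : nat -> bool) := forallb f (seq 0 n).
Definition todot (St : nat -> nat) (Pl : nat -> nat -> nat) i j := St (Pl (St i) (St j)).
Definition tjoin St Pl i j := Pl (todot St Pl i (St j)) j.

Definition valid n (St : nat -> nat) (Pl : nat -> nat -> nat) : bool :=
  allb n (fun i => (St i <? n) && (St (St i) =? i) && (Pl i 0 =? i) && (Pl i 1 =? 1)
     && allb n (fun j => (Pl i j <? n) && (Pl i j =? Pl j i) &&
        (Pl (St (Pl (St i) j)) j =? Pl (St (Pl (St j) i)) i) &&
        allb n (fun k => Pl i (Pl j k) =? Pl (Pl i j) k))).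

Definition is_der n St Pl (t : list nat) : bool :=
  allb n (fun i => allb n (fun j =>
    nth (todot St Pl i j) t 0 =?
      tjoin St Pl (todot St Pl (nth i t 0) j) (todot St Pl i (nth j t 0)))).

Definition ders n St Pl := filter (is_der n St Pl) (tup (seq 0 n) n).

Fixpoint nodupb (l : list (list nat)) : bool :=
  match l with [] => true
  | x :: r => if in_dec (list_eq_dec Nat.eq_dec) x r then false else nodupb r end.

Definition good n m St Pl := (length (ders n St Pl) =? m) && nodupb (ders n St Pl).

Definition bst (v : list nat) i := match i with 0 => 1 | 1 => 0 | S (S a) => nth a v 0 end.
Definition bpl n (v : list nat) i j := match i, j with
 | 0, _ => j | _, 0 => i | 1, _ => 1 | _, 1 => 1
 | S (S a), S (S b) => nth ((n-2) + a*(n-2) + b) v 0 end.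

Definition comp n m := forallb (fun v => if valid n (bst v) (bpl n v) then good n m (bst v) (bpl n v) else true)
  (tup (seq 0 n) (n-2 + (n-2)*(n-2))).

Lemma comp2 : comp 2 2 = true. Proof. vm_compute. reflexivity. Qed.
Lemma comp3 : comp 3 5 = true. Proof. vm_compute. reflexivity. Qed.
Lemma comp4 : comp 4 9 = true. Proof. vm_compute. reflexivity. Qed.

Section Alg.
Variable A : MVAlgebra.
Notation op := (mv_oplus A).
Notation st := (mv_star A).
Notation zr := (mv_zero A).
Notation one := (mv_one A).
Notation odot := (mv_odot A).
Notation join := (mv_join A).

Lemma zero_l x : op zr x = x.
Proof. rewrite mv_comm; apply mv_zero_r. Qed.
Lemma one_r x : op x one = one.
Proof. apply mv_absorb. Qed.
Lemma one_l x : op one x = one.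
Proof. rewrite mv_comm; apply one_r. Qed.
Lemma st_one : st one = zr.
Proof. unfold mv_one; apply mv_invol. Qed.
Lemma st_zero : st zr = one.
Proof. reflexivity. Qed.
Lemma xx x : op (st x) x = one.
Proof.
  pose proof (mv_luk A x one) as H.
  rewrite !one_r, st_one, zero_l in H. congruence.
Qed.
Definition le x y := op (st x) y = one.
Lemma le_refl x : le x x. Proof. apply xx. Qed.
Lemma st_inj x y : st x = st y -> x = y.
Proof. intros H. rewrite <- (mv_invol A x), <- (mv_invol A y), H. reflexivity. Qed.
Lemma odot_comm x y : odot x y = odot y x.
Proof. unfold mv_odot. rewrite mv_comm. reflexivity. Qed.
Lemma odot_assoc x y z : odot x (odot y z) = odot (odot x y) z.
Proof. unfold mv_odot. rewrite !mv_invol, mv_assoc. reflexivity. Qed.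
Lemma odot_one_r x : odot x one = x.
Proof. unfold mv_odot. rewrite st_one, mv_zero_r, mv_invol. reflexivity. Qed.
Lemma odot_one_l x : odot one x = x.
Proof. rewrite odot_comm; apply odot_one_r. Qed.
Lemma odot_zero_l x : odot zr x = zr.
Proof. unfold mv_odot. rewrite st_zero, one_l. apply st_one. Qed.
Lemma le_join_r u v : le u v -> join u v = v.
Proof. intros H. unfold mv_join, mv_odot. rewrite mv_invol, H, st_one, zero_l. reflexivity. Qed.
Lemma le_join_l u v : le v u -> join u v = u.
Proof.
  intros H. unfold mv_join, mv_odot. rewrite mv_invol, mv_luk, H, st_one, zero_l. reflexivity.
Qed.
Lemma join_idem u : join u u = u.
Proof. apply le_join_r, le_refl. Qed.
Lemma odot_le_r x y : le (odot x y) y.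
Proof.
  unfold le, mv_odot. rewrite mv_invol, <- mv_assoc, xx. apply one_r.
Qed.
Lemma odot_le_l x y : le (odot x y) x.
Proof. rewrite odot_comm. apply odot_le_r. Qed.
Lemma le_zero x : le zr x.
Proof. unfold le. rewrite st_zero. apply one_l. Qed.
Lemma odot_eq_one x y : odot x y = one -> x = one.
Proof.
  intros H. pose proof (odot_le_l x y) as H2. unfold le in H2. rewrite H, st_one, zero_l in H2. exact H2.
Qed.
Lemma le_antisym x y : le x y -> le y x -> x = y.
Proof.
  intros H1 H2. pose proof (mv_luk A x y) as H. rewrite H1, H2, st_one, !zero_l in H. auto.
Qed.
Lemma odot_zero_iff x y : odot x y = zr -> le x (st y).
Proof.
  intros H. unfold le. apply st_inj. unfold mv_odot in H. rewrite H, st_one. reflexivity.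
Qed.
Lemma odot_st x : odot x (st x) = zr.
Proof. unfold mv_odot. rewrite mv_invol, xx. apply st_one. Qed.
Lemma zero_ne_one : zr <> one -> forall x, x <> zr -> st x <> one.
Proof. intros _ x H1 H2. apply H1. apply st_inj. rewrite H2. reflexivity. Qed.

Definition g (a b : A) (x : A) : A :=
  if excluded_middle_informative (x = one) then b else odot a x.

Lemma g_der a b : (forall y, le (odot b y) (odot a y)) -> is_derivation A (g a b).
Proof.
  intros H x y. unfold g.
  destruct (excluded_middle_informative (x = one)) as [Hx|Hx];
  destruct (excluded_middle_informative (y = one)) as [Hy|Hy]; subst.
  - rewrite odot_one_l. destruct (excluded_middle_informative (one = one)); [|congruence].
    rewrite odot_one_l, odot_one_r. symmetry; apply join_idem.
  - rewrite odot_one_l. destruct (excluded_middle_informative (y = one)); [congruence|].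
    rewrite odot_one_l. symmetry. apply le_join_r. apply H.
  - rewrite odot_one_r. destruct (excluded_middle_informative (x = one)); [congruence|].
    rewrite odot_one_r. symmetry. apply le_join_l. rewrite (odot_comm x b). apply H.
  - destruct (excluded_middle_informative (odot x y = one)) as [E|E].
    + apply odot_eq_one in E. congruence.
    + rewrite (odot_assoc x a y), (odot_comm x a), <- odot_assoc, join_idem. reflexivity.
Qed.

Lemma g_one a b : g a b one = b.
Proof. unfold g. destruct (excluded_middle_informative (one = one)); congruence. Qed.
Lemma g_not_one a b x : x <> one -> g a b x = odot a x.
Proof. unfold g. intros. destruct (excluded_middle_informative (x = one)); congruence. Qed.

Definition dd a := g a a.
Definition ee b := g one b.

Lemma dd_der a : is_derivation A (dd a).
Proof. apply g_der. intros; apply le_refl. Qed.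
Lemma ee_der b : is_derivation A (ee b).
Proof. apply g_der. intros. rewrite odot_one_l. apply odot_le_r. Qed.
Lemma h_der a : is_derivation A (g a zr).
Proof. apply g_der. intros. rewrite odot_zero_l. apply le_zero. Qed.

Lemma dd_inj a b : dd a = dd b -> a = b.
Proof. intros H. pose proof (f_equal (fun f => f one) H) as H1. simpl in H1. unfold dd in H1. rewrite !g_one in H1. auto. Qed.
Lemma ee_inj a b : ee a = ee b -> a = b.
Proof. intros H. pose proof (f_equal (fun f => f one) H) as H1. simpl in H1. unfold ee in H1. rewrite !g_one in H1. auto. Qed.

Hypothesis Hnt : zr <> one.

Lemma dd_ee a b w : b <> one -> w <> zr -> w <> one -> dd a <> ee b.
Proof.
  intros Hb Hw1 Hw2 H. assert (a = b) by (pose proof (f_equal (fun f => f one) H) as H1; simpl in H1;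
    unfold dd, ee in H1; rewrite !g_one in H1; auto). subst.
  destruct (classic (b = zr)) as [E|E].
  - subst. pose proof (f_equal (fun f => f w) H) as H1; simpl in H1. unfold dd, ee in H1.
    rewrite !g_not_one in H1 by auto. rewrite odot_zero_l, odot_one_l in H1. auto.
  - pose proof (f_equal (fun f => f (st b)) H) as H1; simpl in H1. unfold dd, ee in H1.
    assert (st b <> one) by (apply zero_ne_one; auto).
    rewrite !g_not_one in H1 by auto. rewrite odot_st, odot_one_l in H1.
    apply Hb. apply st_inj. rewrite <- H1. symmetry; apply st_one.
Qed.

Lemma h_dd a w b : a <> one -> odot a w <> zr -> w <> one -> g a zr <> dd b.
Proof.
  intros Ha Haw Hw H. assert (b = zr) by (pose proof (f_equal (fun f => f one) H) as H1; simpl in H1;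
    unfold dd in H1; rewrite !g_one in H1; auto). subst.
  pose proof (f_equal (fun f => f w) H) as H1; simpl in H1. unfold dd in H1.
  rewrite !g_not_one in H1 by auto. rewrite odot_zero_l in H1. auto.
Qed.

Lemma h_ee a b : a <> one -> a <> zr -> g a zr <> ee b.
Proof.
  intros Ha Ha0 H. assert (b = zr) by (pose proof (f_equal (fun f => f one) H) as H1; simpl in H1;
    unfold ee in H1; rewrite !g_one in H1; auto). subst.
  assert (st a <> one) by (apply zero_ne_one; auto).
  pose proof (f_equal (fun f => f (st a)) H) as H1; simpl in H1. unfold ee in H1.
  rewrite !g_not_one in H1 by auto. rewrite odot_st, odot_one_l in H1.
  apply Ha. apply st_inj. rewrite <- H1. symmetry; apply st_one.
Qed.

Lemma exists_pair c d : c <> zr -> c <> one -> d <> zr -> d <> one -> c <> d ->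
  exists a w, a <> zr /\ a <> one /\ w <> one /\ odot a w <> zr.
Proof.
  intros. 
  assert (Hc : st c <> one) by (apply zero_ne_one; auto).
  assert (Hc0 : st c <> zr) by (intro E; apply H0; apply st_inj; rewrite E, st_one; reflexivity).
  assert (Hd : st d <> one) by (apply zero_ne_one; auto).
  assert (Hd0 : st d <> zr) by (intro E; apply H2; apply st_inj; rewrite E, st_one; reflexivity).
  destruct (classic (odot c c = zr)) as [E1|E1]; [|exists c, c; auto].
  destruct (classic (odot (st c) (st c) = zr)) as [E2|E2]; [|exists (st c), (st c); auto].
  destruct (classic (odot d d = zr)) as [E3|E3]; [|exists d, d; auto].
  destruct (classic (odot (st d) (st d) = zr)) as [E4|E4]; [|exists (st d), (st d); auto].
  destruct (classic (odot c d = zr)) as [E5|E5]; [|exists c, d; auto].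
  destruct (classic (odot d c = zr)) as [E6|E6]; [|exists d, c; auto].
  exfalso. apply odot_zero_iff in E1, E2, E3, E4, E5, E6. rewrite mv_invol in E2, E4.
  assert (c = st c) by (apply le_antisym; auto).
  assert (d = st d) by (apply le_antisym; auto).
  rewrite <- H5 in E5. rewrite <- H4 in E6. apply H3. apply le_antisym; auto.
Qed.

End Alg.

Lemma nth_map_seq {T} (f : nat -> T) n i d : i < n -> nth i (map f (seq 0 n)) d = f i.
Proof.
  intros H. rewrite nth_indep with (d' := f 0) by (rewrite length_map, length_seq; auto).
  rewrite map_nth, seq_nth by auto. reflexivity.
Qed.

Lemma has_card_list {T} (P : T -> Prop) n : has_card T P n ->
  exists l, length l = n /\ NoDup l /\ (forall x, P x <-> In x l).
Proof.
  intros [f [Hinj [HP Hsur]]].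
  exists (map f (seq 0 n)). split; [now rewrite length_map, length_seq|]. split.
  - apply (NoDup_nth _ (f 0)). rewrite length_map, length_seq. intros i j Hi Hj E.
    rewrite !nth_map_seq in E by auto. auto.
  - intros x. split.
    + intros Hx. destruct (Hsur x Hx) as [i [Hi E]]. subst. apply in_map, in_seq. lia.
    + intros Hx. apply in_map_iff in Hx. destruct Hx as [i [E Hi]]. subst. apply in_seq in Hi. apply HP; lia.
Qed.

Lemma list_has_card {T} (P : T -> Prop) (l : list T) (d : T) : NoDup l -> (forall x, P x <-> In x l) ->
  has_card T P (length l).
Proof.
  intros Hnd Hl. exists (fun i => nth i l d). split; [|split].
  - intros i j Hi Hj E. eapply NoDup_nth; eauto.
  - intros i Hi. apply Hl. apply nth_In; auto.
  - intros x Hx. apply Hl in Hx. apply In_nth; auto.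
Qed.

Lemma card_pigeon {T} (P : T -> Prop) m l : has_card T P m -> NoDup l -> (forall x, In x l -> P x) -> length l <= m.
Proof.
  intros Hc Hnd Hl. destruct (has_card_list _ _ Hc) as [l' [Hlen [Hnd' Hl']]].
  subst. apply NoDup_incl_length; auto. intros x Hx. apply Hl', Hl, Hx.
Qed.

Lemma card_unique {T} (P : T -> Prop) m m' : has_card T P m -> has_card T P m' -> m = m'.
Proof.
  intros H1 H2. destruct (has_card_list _ _ H1) as [l [Hlen [Hnd Hl]]].
  destruct (has_card_list _ _ H2) as [l' [Hlen' [Hnd' Hl']]].
  assert (length l <= m') by (apply (card_pigeon P); auto; intros; apply Hl; auto).
  assert (length l' <= m) by (apply (card_pigeon P); auto; intros; apply Hl'; auto).
  lia.
Qed.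

Lemma normalize (A : MVAlgebra) n : mv_zero A <> mv_one A -> has_card A (fun _ => True) n ->
  exists rest, length (mv_zero A :: mv_one A :: rest) = n /\ NoDup (mv_zero A :: mv_one A :: rest)
    /\ forall x, In x (mv_zero A :: mv_one A :: rest).
Proof.
  intros Hnt Hc. destruct (has_card_list _ _ Hc) as [l [Hlen [Hnd Hl]]].
  assert (H0 : In (mv_zero A) l) by (apply Hl; auto).
  destruct (in_split _ _ H0) as [l1 [l2 E]]. subst l.
  assert (P1 : Permutation (l1 ++ mv_zero A :: l2) (mv_zero A :: l1 ++ l2))
    by (symmetry; apply Permutation_middle).
  assert (H1 : In (mv_one A) (l1 ++ l2)).
  { assert (In (mv_one A) (mv_zero A :: l1 ++ l2)) by (eapply Permutation_in; eauto; apply Hl; auto).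
    destruct H; auto. congruence. }
  destruct (in_split _ _ H1) as [l3 [l4 E]]. rewrite E in P1.
  assert (P2 : Permutation (l1 ++ mv_zero A :: l2) (mv_zero A :: mv_one A :: l3 ++ l4)).
  { eapply perm_trans; [exact P1|]. constructor. symmetry; apply Permutation_middle. }
  exists (l3 ++ l4). split; [|split].
  - rewrite <- Hlen. symmetry; apply Permutation_length; auto.
  - eapply Permutation_NoDup; eauto.
  - intros x. eapply Permutation_in; eauto. apply Hl; auto.
Qed.

Lemma allb_true n f : (forall i, i < n -> f i = true) -> allb n f = true.
Proof. intros H. unfold allb. apply forallb_forall. intros x Hx. apply in_seq in Hx. apply H; lia. Qed.
Lemma allb_spec n f : allb n f = true -> forall i, i < n -> f i = true.
Proof. unfold allb. rewrite forallb_forall. intros H i Hi. apply H, in_seq. lia. Qed.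

Lemma tup_in c m v : In v (tup c m) -> length v = m /\ (forall x, In x v -> In x c).
Proof.
  revert v. induction m; simpl; intros v H.
  - destruct H as [<-|[]]. split; auto. intros _ [].
  - apply in_flat_map in H. destruct H as [x [Hx Hv]]. apply in_map_iff in Hv.
    destruct Hv as [w [<- Hw]]. apply IHm in Hw. destruct Hw. simpl. split; [lia|].
    intros y [<-|Hy]; auto.
Qed.
Lemma in_tup c m v : length v = m -> (forall x, In x v -> In x c) -> In v (tup c m).
Proof.
  revert v. induction m; simpl; intros v Hl Hv.
  - destruct v; [auto|discriminate].
  - destruct v as [|x v]; [discriminate|]. apply in_flat_map. exists x. split; [apply Hv; simpl; auto|].
    apply in_map. apply IHm; [simpl in Hl; lia|]. intros; apply Hv; simpl; auto.
Qed.

Lemma nodupb_spec l : nodupb l = true -> NoDup l.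
Proof.
  induction l; simpl; intros H; constructor.
  - destruct (in_dec (list_eq_dec Nat.eq_dec) a l); [discriminate|auto].
  - destruct (in_dec (list_eq_dec Nat.eq_dec) a l); [discriminate|auto].
Qed.

Section Refl.
Variable A : MVAlgebra.
Variable n : nat.
Variable l : list A.
Hypothesis Hlen : length l = n.
Hypothesis Hnd : NoDup l.
Hypothesis Hcov : forall x, In x l.

Definition L i := nth i l (mv_zero A).
Lemma cov x : exists i, i < n /\ L i = x.
Proof. rewrite <- Hlen. apply In_nth. auto. Qed.
Definition idx x := proj1_sig (constructive_indefinite_description _ (cov x)).
Lemma idx_lt x : idx x < n.
Proof. unfold idx. destruct (constructive_indefinite_description _ _) as [i [Hi Hi']]. auto. Qed.
Lemma L_idx x : L (idx x) = x.
Proof. unfold idx. destruct (constructive_indefinite_description _ _) as [i [Hi' Hi]]. auto. Qed.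
Lemma L_inj i j : i < n -> j < n -> L i = L j -> i = j.
Proof. intros. eapply NoDup_nth; eauto; rewrite Hlen; auto. Qed.
Lemma idx_L i : i < n -> idx (L i) = i.
Proof. intros. apply L_inj; auto using idx_lt. apply L_idx. Qed.

Definition rep (S : nat -> nat) (P : nat -> nat -> nat) :=
 (forall i, i < n -> S i < n /\ mv_star A (L i) = L (S i)) /\
 (forall i j, i<n -> j<n -> P i j < n /\ mv_oplus A (L i) (L j) = L (P i j)).

Hypothesis H0 : L 0 = mv_zero A.
Hypothesis H1 : L 1 = mv_one A.
Hypothesis Hn : 2 <= n.

Lemma rep_valid S P : rep S P -> valid n S P = true.
Proof.
  intros [HS HP]. apply allb_true. intros i Hi.
  destruct (HS i Hi) as [Si ESi]. destruct (HS _ Si) as [SSi ESSi].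
  assert (Hn0 : 0 < n) by lia. assert (Hn1 : 1 < n) by lia.
  repeat (apply andb_true_intro; split).
  - apply Nat.ltb_lt; auto.
  - apply Nat.eqb_eq. apply L_inj; auto. rewrite <- ESSi, <- ESi. apply mv_invol.
  - apply Nat.eqb_eq. destruct (HP i 0 Hi Hn0) as [? E]. apply L_inj; auto. rewrite <- E, H0. apply mv_zero_r.
  - apply Nat.eqb_eq. destruct (HP i 1 Hi Hn1) as [? E]. apply L_inj; auto. rewrite <- E, H1. apply one_r.
  - apply allb_true. intros j Hj.
    destruct (HP i j Hi Hj) as [Pij EPij]. destruct (HP j i Hj Hi) as [Pji EPji].
    destruct (HS j Hj) as [Sj ESj].
    destruct (HP _ _ Si Hj) as [P1 E1]. destruct (HP _ _ Sj Hi) as [P2 E2].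
    destruct (HS _ P1) as [S1 ES1]. destruct (HS _ P2) as [S2 ES2].
    destruct (HP _ _ S1 Hj) as [Q1 F1]. destruct (HP _ _ S2 Hi) as [Q2 F2].
    repeat (apply andb_true_intro; split).
    + apply Nat.ltb_lt; auto.
    + apply Nat.eqb_eq. apply L_inj; auto. rewrite <- EPij, <- EPji. apply mv_comm.
    + apply Nat.eqb_eq. apply L_inj; auto. rewrite <- F1, <- F2, <- ES1, <- ES2, <- E1, <- E2, <- ESi, <- ESj.
      apply mv_luk.
    + apply allb_true. intros k Hk. apply Nat.eqb_eq.
      destruct (HP j k Hj Hk) as [Pjk EPjk]. destruct (HP _ _ Hi Pjk) as [R1 G1].
      destruct (HP _ _ Pij Hk) as [R2 G2].
      apply L_inj; auto. rewrite <- G1, <- G2, <- EPjk, <- EPij. apply mv_assoc.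
Qed.

Lemma rep_odot S P i j : rep S P -> i < n -> j < n ->
  todot S P i j < n /\ mv_odot A (L i) (L j) = L (todot S P i j).
Proof.
  intros [HS HP] Hi Hj. unfold todot, mv_odot.
  destruct (HS i Hi) as [Si ESi]. destruct (HS j Hj) as [Sj ESj].
  destruct (HP _ _ Si Sj) as [P1 E1]. destruct (HS _ P1) as [S1 ES1].
  split; auto. rewrite ESi, ESj, E1. auto.
Qed.

Lemma rep_join S P i j : rep S P -> i < n -> j < n ->
  tjoin S P i j < n /\ mv_join A (L i) (L j) = L (tjoin S P i j).
Proof.
  intros HR Hi Hj. pose proof HR as [HS HP]. unfold tjoin, mv_join.
  destruct (HS j Hj) as [Sj ESj].
  destruct (rep_odot S P i (S j) HR Hi Sj) as [O1 EO1].
  destruct (HP _ _ O1 Hj) as [P1 E1].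
  split; auto. rewrite ESj, EO1. auto.
Qed.

Definition Fd (t : list nat) : A -> A := fun x => L (nth (idx x) t 0).

Lemma rep_der_has_card S P m : rep S P -> good n m S P = true ->
  has_card (A -> A) (is_derivation A) m.
Proof.
  intros HR Hg. apply andb_prop in Hg. destruct Hg as [Hlm Hnd2].
  apply Nat.eqb_eq in Hlm. apply nodupb_spec in Hnd2.
  set (D := ders n S P) in *.
  assert (HD : forall t, In t D -> length t = n /\ (forall x, In x t -> x < n) /\ is_der n S P t = true).
  { intros t Ht. unfold D, ders in Ht. apply filter_In in Ht. destruct Ht as [Ht Hd].
    apply tup_in in Ht. destruct Ht as [Ht1 Ht2]. split; auto. split; auto.
    intros x Hx. apply Ht2, in_seq in Hx. lia. }
  assert (Hnth : forall t i, In t D -> i < n -> nth i t 0 < n).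
  { intros t i Ht Hi. destruct (HD t Ht) as [Hl1 [Hl2 _]]. apply Hl2, nth_In. lia. }
  exists (fun k => Fd (nth k D [])). split; [|split].
  - intros i j Hi Hj E. apply (NoDup_nth D []); auto; try lia.
    assert (Ii : In (nth i D []) D) by (apply nth_In; lia).
    assert (Ij : In (nth j D []) D) by (apply nth_In; lia).
    apply nth_ext with (d := 0) (d' := 0).
    + destruct (HD _ Ii), (HD _ Ij). lia.
    + intros q Hq. destruct (HD _ Ii) as [Hli _]. rewrite Hli in Hq.
      pose proof (f_equal (fun f => f (L q)) E) as E2. simpl in E2. unfold Fd in E2.
      rewrite idx_L in E2 by auto. apply L_inj; auto.
  - intros k Hk. assert (Ik : In (nth k D []) D) by (apply nth_In; lia).
    destruct (HD _ Ik) as [_ [_ Hder]]. set (t := nth k D []) in *.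
    intros x y. rewrite <- (L_idx x), <- (L_idx y).
    pose proof (idx_lt x) as Hx. pose proof (idx_lt y) as Hy.
    set (i := idx x) in *. set (j := idx y) in *.
    pose proof (allb_spec _ _ (allb_spec _ _ Hder i Hx) j Hy) as E. simpl in E. apply Nat.eqb_eq in E.
    destruct (rep_odot S P i j HR Hx Hy) as [O1 EO1]. rewrite EO1.
    unfold Fd. rewrite !idx_L by auto.
    destruct (rep_odot S P _ j HR (Hnth t i Ik Hx) Hy) as [O2 EO2]. rewrite EO2.
    destruct (rep_odot S P i _ HR Hx (Hnth t j Ik Hy)) as [O3 EO3]. rewrite EO3.
    destruct (rep_join S P _ _ HR O2 O3) as [O4 EO4]. rewrite EO4. rewrite E. reflexivity.
  - intros d Hd. set (t := map (fun q => idx (d (L q))) (seq 0 n)).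
    assert (Ht : In t D).
    { unfold D, ders. apply filter_In. split.
      - apply in_tup. unfold t. rewrite length_map, length_seq; auto.
        intros x Hx. unfold t in Hx. apply in_map_iff in Hx. destruct Hx as [q [<- _]].
        apply in_seq. pose proof (idx_lt (d (L q))). lia.
      - apply allb_true. intros i Hi. apply allb_true. intros j Hj. apply Nat.eqb_eq.
        unfold t. destruct (rep_odot S P i j HR Hi Hj) as [O1 EO1].
        rewrite !nth_map_seq by auto.
        pose proof (idx_lt (d (L i))) as Di. pose proof (idx_lt (d (L j))) as Dj.
        destruct (rep_odot S P _ j HR Di Hj) as [O2 EO2].
        destruct (rep_odot S P i _ HR Hi Dj) as [O3 EO3].
        destruct (rep_join S P _ _ HR O2 O3) as [O4 EO4].
        rewrite <- EO1, Hd, <- (idx_L _ O4), <- EO4, <- EO2, <- EO3, !L_idx. reflexivity. }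
    destruct (In_nth D t [] Ht) as [k [Hk Ek]]. exists k. split; [lia|].
    rewrite Ek. apply functional_extensionality. intros x. unfold Fd, t.
    rewrite nth_map_seq by apply idx_lt. rewrite !L_idx. reflexivity.
Qed.
End Refl.

Definition params n (St : nat -> nat) (Pl : nat -> nat -> nat) :=
  map St (seq 2 (n-2)) ++ flat_map (fun a => map (Pl a) (seq 2 (n-2))) (seq 2 (n-2)).

Lemma agree n St Pl : 2 <= n <= 4 -> St 0 = 1 -> St 1 = 0 ->
  (forall j, j < n -> Pl 0 j = j) -> (forall i, i < n -> Pl i 0 = i) ->
  (forall j, j < n -> Pl 1 j = 1) -> (forall i, i < n -> Pl i 1 = 1) ->
  (forall i, i < n -> bst (params n St Pl) i = St i) /\
  (forall i j, i < n -> j < n -> bpl n (params n St Pl) i j = Pl i j) /\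
  length (params n St Pl) = n-2 + (n-2)*(n-2).
Proof.
  intros Hn S0 S1 P0 P0' P1 P1'.
  assert (E : n = 2 \/ n = 3 \/ n = 4) by lia; destruct E as [E|[E|E]]; subst n;
  (split; [|split]; [intros i Hi | intros i j Hi Hj | reflexivity]);
  repeat (destruct i as [|i]; try lia); try (repeat (destruct j as [|j]; try lia));
  simpl; auto;
  first [ symmetry; apply P0; lia | symmetry; apply P0'; lia | symmetry; apply P1; lia
        | symmetry; apply P1'; lia | reflexivity ].
Qed.

Lemma fwd (A : MVAlgebra) n m : mv_zero A <> mv_one A -> 2 <= n <= 4 -> comp n m = true ->
  has_card A (fun _ => True) n -> has_card (A -> A) (is_derivation A) m.
Proof.
  intros Hnt Hn Hc HA.
  destruct (normalize A n Hnt HA) as [rest [Hlen [Hnd Hcov]]].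
  set (l := mv_zero A :: mv_one A :: rest) in *.
  set (St := fun i => idx A n l Hlen Hcov (mv_star A (L A l i))).
  set (Pl := fun i j => idx A n l Hlen Hcov (mv_oplus A (L A l i) (L A l j))).
  assert (HL0 : L A l 0 = mv_zero A) by reflexivity.
  assert (HL1 : L A l 1 = mv_one A) by reflexivity.
  assert (I1 : forall x, idx A n l Hlen Hcov x = idx A n l Hlen Hcov x) by auto.
  assert (Hag := agree n St Pl Hn).
  destruct Hag as [AS [AP Alen]].
  - unfold St. rewrite HL0. change (mv_star A (mv_zero A)) with (mv_one A). rewrite <- HL1. apply idx_L; auto; lia.
  - unfold St. rewrite HL1. unfold mv_one. rewrite mv_invol, <- HL0. apply idx_L; auto; lia.
  - intros j Hj. unfold Pl. rewrite HL0, zero_l. apply idx_L; auto.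
  - intros j Hj. unfold Pl. rewrite HL0, mv_zero_r. apply idx_L; auto.
  - intros j Hj. unfold Pl. rewrite HL1, one_l, <- HL1. apply idx_L; auto; lia.
  - intros j Hj. unfold Pl. rewrite HL1, one_r, <- HL1. apply idx_L; auto; lia.
  - set (v := params n St Pl) in *.
    assert (HR : rep A n l (bst v) (bpl n v)).
    { split.
      - intros i Hi. rewrite AS by auto. unfold St. split; [apply idx_lt|]. rewrite L_idx. reflexivity.
      - intros i j Hi Hj. rewrite AP by auto. unfold Pl. split; [apply idx_lt|]. rewrite L_idx. reflexivity. }
    apply (rep_der_has_card A n l Hlen Hnd Hcov) with (S := bst v) (P := bpl n v); auto; try lia.
    assert (Hv : valid n (bst v) (bpl n v) = true) by (apply rep_valid with (l := l); auto; lia).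
    unfold comp in Hc. rewrite forallb_forall in Hc.
    assert (Iv : In v (tup (seq 0 n) (n - 2 + (n - 2) * (n - 2)))).
    { apply in_tup; auto. intros x Hx. unfold v, params in Hx. apply in_seq.
      apply in_app_iff in Hx. destruct Hx as [Hx|Hx].
      - apply in_map_iff in Hx. destruct Hx as [a [<- Ha]]. unfold St. pose proof (idx_lt A n l Hlen Hcov (mv_star A (L A l a))). lia.
      - apply in_flat_map in Hx. destruct Hx as [a [_ Hx]]. apply in_map_iff in Hx. destruct Hx as [b [<- _]].
        unfold Pl. pose proof (idx_lt A n l Hlen Hcov (mv_oplus A (L A l a) (L A l b))). lia. }
    specialize (Hc v Iv). rewrite Hv in Hc. exact Hc.
Qed.

Lemma NoDup_app_disj {T} (l1 l2 : list T) : NoDup l1 -> NoDup l2 ->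
  (forall x, In x l1 -> In x l2 -> False) -> NoDup (l1 ++ l2).
Proof.
  induction l1; simpl; intros H1 H2 Hd; auto.
  inversion H1; subst. constructor.
  - rewrite in_app_iff. intros [H|H]; [auto|]. apply (Hd a); auto.
  - apply IHl1; auto. intros x Hx Hy. apply (Hd x); auto.
Qed.

Ltac ndtac := repeat constructor; simpl; intros Hx; repeat destruct Hx as [Hx|Hx]; try congruence; auto.

Lemma map_dd_nd (A : MVAlgebra) l : NoDup l -> NoDup (map (dd A) l).
Proof. intros. apply FinFun.Injective_map_NoDup; auto. intros x y; apply dd_inj. Qed.
Lemma map_ee_nd (A : MVAlgebra) l : NoDup l -> NoDup (map (ee A) l).
Proof. intros. apply FinFun.Injective_map_NoDup; auto. intros x y; apply ee_inj. Qed.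

Lemma dd_ee_disj (A : MVAlgebra) (Hnt : mv_zero A <> mv_one A) w l1 l2 :
  w <> mv_zero A -> w <> mv_one A -> (forall b, In b l2 -> b <> mv_one A) ->
  forall x, In x (map (dd A) l1) -> In x (map (ee A) l2) -> False.
Proof.
  intros Hw1 Hw2 Hl2 x H1 H2. apply in_map_iff in H1, H2.
  destruct H1 as [a [<- _]]. destruct H2 as [b [E Hb]].
  apply (dd_ee A Hnt a b w); auto.
Qed.

Lemma all_der (A : MVAlgebra) l1 l2 hs : (forall h, In h hs -> is_derivation A h) ->
  forall x, In x (map (dd A) l1 ++ map (ee A) l2 ++ hs) -> is_derivation A x.
Proof.
  intros Hh x Hx. rewrite !in_app_iff, !in_map_iff in Hx.
  destruct Hx as [[a [<- _]]|[[a [<- _]]|Hx]]; auto using dd_der, ee_der.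
Qed.

Theorem proposition3p16 (A : MVAlgebra) (Hnontriv : mv_zero A <> mv_one A) :
  (has_card (A -> A) (is_derivation A) 2 <-> has_card A (fun _ => True) 2) /\
  (has_card (A -> A) (is_derivation A) 5 <-> has_card A (fun _ => True) 3) /\
  (has_card (A -> A) (is_derivation A) 9 <-> has_card A (fun _ => True) 4).
Proof.
  set (zr := mv_zero A) in *. set (one := mv_one A) in *.
  assert (F2 : has_card A (fun _ => True) 2 -> has_card (A -> A) (is_derivation A) 2)
    by (apply fwd; [exact Hnontriv|lia|vm_compute; reflexivity]).
  assert (F3 : has_card A (fun _ => True) 3 -> has_card (A -> A) (is_derivation A) 5)
    by (apply fwd; [exact Hnontriv|lia|vm_compute; reflexivity]).
  assert (F4 : has_card A (fun _ => True) 4 -> has_card (A -> A) (is_derivation A) 9)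
    by (apply fwd; [exact Hnontriv|lia|vm_compute; reflexivity]).
  assert (C2 : (~ exists c, c <> zr /\ c <> one) -> has_card A (fun _ => True) 2).
  { intros Hn. apply (list_has_card _ [zr; one] zr); [ndtac|].
    intros x. split; auto. intros _. destruct (classic (x = zr)); [simpl; auto|].
    destruct (classic (x = one)); [simpl; auto|]. exfalso; eauto. }
  assert (C3 : forall c, c <> zr -> c <> one -> (~ exists d, d <> zr /\ d <> one /\ d <> c) ->
     has_card A (fun _ => True) 3).
  { intros c H1 H2 Hn. apply (list_has_card _ [zr; one; c] zr); [ndtac|].
    intros x. split; auto. intros _. destruct (classic (x = zr)); [simpl; auto|].
    destruct (classic (x = one)); [simpl; auto|]. destruct (classic (x = c)); [simpl; auto|].
    exfalso; eauto. }
  split; [|split]; split; auto.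
  -
    intros HD. apply C2. intros [c [H1 H2]].
    assert (length (map (dd A) [zr; one; c]) <= 2); [|simpl in *; lia].
    apply (card_pigeon _ _ _ HD).
    + apply map_dd_nd. ndtac.
    + intros x Hx. apply in_map_iff in Hx. destruct Hx as [a [<- _]]. apply dd_der.
  - intros HD. destruct (classic (exists c, c <> zr /\ c <> one)) as [[c [H1 H2]]|Hn].
    2:{ exfalso. pose proof (card_unique _ _ _ HD (F2 (C2 Hn))). lia. }
    destruct (classic (exists d, d <> zr /\ d <> one /\ d <> c)) as [[d [H3 [H4 H5]]]|Hn].
    2:{ apply (C3 c); auto. }
    exfalso.
    assert (length (map (dd A) [zr; one; c; d] ++ map (ee A) [zr; c; d] ++ []) <= 5); [|simpl in *; lia].
    apply (card_pigeon _ _ _ HD).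
    + apply NoDup_app_disj; [apply map_dd_nd; ndtac| rewrite app_nil_r; apply map_ee_nd; ndtac|].
      rewrite app_nil_r. apply (dd_ee_disj A Hnontriv c); auto.
      intros b Hb. simpl in Hb. repeat destruct Hb as [Hb|Hb]; subst; auto.
    + apply all_der. intros h [].
  - intros HD. destruct (classic (exists c, c <> zr /\ c <> one)) as [[c [H1 H2]]|Hn].
    2:{ exfalso. pose proof (card_unique _ _ _ HD (F2 (C2 Hn))). lia. }
    destruct (classic (exists d, d <> zr /\ d <> one /\ d <> c)) as [[d [H3 [H4 H5]]]|Hn].
    2:{ exfalso. pose proof (card_unique _ _ _ HD (F3 (C3 c H1 H2 Hn))). lia. }
    destruct (classic (exists e, e <> zr /\ e <> one /\ e <> c /\ e <> d)) as [[e [H6 [H7 [H8 H9]]]]|Hn].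
    2:{ apply (list_has_card _ [zr; one; c; d] zr); [ndtac|].
        intros x. split; auto. intros _. destruct (classic (x = zr)); [simpl; auto|].
        destruct (classic (x = one)); [simpl; auto|]. destruct (classic (x = c)); [simpl; auto|].
        destruct (classic (x = d)); [simpl; auto|]. exfalso; eauto 6. }
    exfalso.
    destruct (exists_pair A Hnontriv c d) as [a [w [Ha0 [Ha1 [Hw Haw]]]]]; auto.
    assert (length (map (dd A) [zr; one; c; d; e] ++ map (ee A) [zr; c; d; e] ++ [g A a zr]) <= 9); [|simpl in *; lia].
    apply (card_pigeon _ _ _ HD).
    + apply NoDup_app_disj; [apply map_dd_nd; ndtac| apply NoDup_app_disj; [apply map_ee_nd; ndtac|ndtac|] |].
      * intros x H1' [<-|[]]. apply in_map_iff in H1'. destruct H1' as [b [E _]].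
        exact (h_ee A Hnontriv a b Ha1 Ha0 (eq_sym E)).
      * intros x H1' H2'. apply in_app_iff in H2'. destruct H2' as [H2'|[<-|[]]].
        -- apply (dd_ee_disj A Hnontriv c [zr; one; c; d; e] [zr; c; d; e]) with (x := x); auto.
           intros b Hb. simpl in Hb. repeat destruct Hb as [Hb|Hb]; subst; auto.
        -- apply in_map_iff in H1'. destruct H1' as [b [E _]].
           exact (h_dd A a w b Ha1 Haw Hw (eq_sym E)).
    + apply all_der. intros h [<-|[]]. apply h_der.
Qed.
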